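(* Let $\lambda>0$ with $\lambda\neq 1$ and $\mu=1/\lambda$, and let $A\in M_3\otimes M_3$ be the $9\times 9$ matrix (written as a $3\times 3$ block matrix with $3\times 3$ blocks) $$A=\left(\begin{array}{ccc|ccc|ccc} 1&0&0&0&1&0&0&0&1\\ 0&\lambda^2&0&1&0&0&0&0&0\\ 0&0&\mu^2&0&0&0&1&0&0\\ \hline 0&1&0&\mu^2&0&0&0&0&0\\ 1&0&0&0&1&0&0&0&1\\ 0&0&0&0&0&\lambda^2&0&1&0\\ \hline 0&0&1&0&0&0&\lambda^2&0&0\\ 0&0&0&0&0&1&0&\mu^2&0\\ 1&0&0&0&1&0&0&0&1 \end{array}\right).$$ Then $A\in\mathbb{T}\setminus\mathbb{V}_1$ (i.e. $A$ is, up to normalization, an entangled state with positive partial transpose), and $A$ generates an extreme ray of the cone $\mathbb{T}$: whenever $A=B+C$ with $B,C\in\mathbb{T}$, both $B$ and $C$ are nonnegative scalar multiples of $A$.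
   Context: Identify $M_3\otimes M_3$ with $3\times 3$ block matrices $A=\sum_{i,j=1}^3 a_{ij}\otimes e_{ij}$ with blocks $a_{ij}\in M_3$; the partial transpose is $A^\tau=\sum_{i,j}a_{ji}\otimes e_{ij}$. $\mathbb{T}$ is the cone of $A\in M_3\otimes M_3$ such that both $A$ and $A^\tau$ are positive semi-definite. For $z\in M_3$ with rows $z_1,z_2,z_3\in\mathbb C^3$ (as column vectors), $\tilde z\tilde z^*$ denotes the block matrix whose $(i,j)$ block is $z_iz_j^*$; $\mathbb{V}_1$ is the convex cone generated by $\{\tilde z\tilde z^*:\operatorname{rank} z\le 1\}$. *)

(* Defs.v *)
(* Complex scalars: an arbitrary numClosedFieldType C
   (e.g. algC, or complex R over a real closed field). *)
From mathcomp Require Import all_boot all_order all_algebra.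
Set Implicit Arguments. Unset Strict Implicit. Unset Printing Implicit Defensive.
Import Order.TTheory GRing.Theory Num.Theory Num.Def.
Local Open Scope ring_scope.

Section Defs.
Variable C : numClosedFieldType.

Definition adjmx m n (M : 'M[C]_(m, n)) : 'M[C]_(n, m) := (map_mx conjC M)^T.

Definition psdmx n (M : 'M[C]_n) : Prop :=
  adjmx M = M /\ forall v : 'cV[C]_n, 0 <= (adjmx v *m M *m v) 0 0.

(* M_3 (x) M_3 is 'M_9; index (i,k) with block i and inner index k is 3*i+k *)
Definition idx (i k : 'I_3) : 'I_9 := inord (3 * i + k).
Definition blk (p : 'I_9) : 'I_3 := inord (p %/ 3).
Definition inn (p : 'I_9) : 'I_3 := inord (p %% 3).

(* partial transpose: (i,j) block of A^tau is the (j,i) block of A *)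
Definition ptrans (A : 'M[C]_9) : 'M[C]_9 :=
  \matrix_(p, q) A (idx (blk q) (inn p)) (idx (blk p) (inn q)).

Definition inT (A : 'M[C]_9) : Prop := psdmx A /\ psdmx (ptrans A).

Definition ztilde (z : 'M[C]_3) : 'cV[C]_9 := \col_p z (blk p) (inn p).

Definition zzstar (z : 'M[C]_3) : 'M[C]_9 := ztilde z *m adjmx (ztilde z).

Definition inV1 (A : 'M[C]_9) : Prop :=
  exists (N : nat) (c : 'I_N -> C) (z : 'I_N -> 'M[C]_3),
    (forall t, 0 <= c t) /\ (forall t, (\rank (z t) <= 1)%N) /\
    A = \sum_(t < N) c t *: zzstar (z t).

(* entries of the matrix A of the theorem (0-based indices), mu = 1/lam *)
Definition Aent (lam : C) (i j : nat) : C :=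
  let mu := lam^-1 in
  match i, j with
  | 0, 0 | 0, 4 | 0, 8 | 4, 0 | 4, 4 | 4, 8 | 8, 0 | 8, 4 | 8, 8 => 1
  | 1, 3 | 3, 1 | 2, 6 | 6, 2 | 5, 7 | 7, 5 => 1
  | 1, 1 | 5, 5 | 6, 6 => lam ^+ 2
  | 2, 2 | 3, 3 | 7, 7 => mu ^+ 2
  | _, _ => 0
  end.

Definition Amat (lam : C) : 'M[C]_9 := \matrix_(i, j) Aent lam i j.

End Defs.

(* Main.v *)
Require Import Defs.
From mathcomp Require Import all_boot all_order all_algebra.
From mathcomp Require Import ring.
Import Order.TTheory GRing.Theory Num.Theory.
Set Implicit Arguments. Unset Strict Implicit. Unset Printing Implicit Defensive.
Local Open Scope ring_scope.

Section S.
Variable C : numClosedFieldType.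

Lemma adjmx_mul m n p (A : 'M[C]_(m, n)) (B : 'M[C]_(n, p)) :
  adjmx (A *m B) = adjmx B *m adjmx A.
Proof. by rewrite /adjmx map_mxM trmx_mul. Qed.

Lemma adjmxB m n (A B : 'M[C]_(m, n)) : adjmx (A - B) = adjmx A - adjmx B.
Proof. by rewrite /adjmx map_mxB linearB. Qed.

Lemma adjmxZ m n (a : C) (A : 'M[C]_(m, n)) : adjmx (a *: A) = a^* *: adjmx A.
Proof. by apply/matrixP=> i j; rewrite !mxE rmorphM. Qed.

Lemma entryB m n (A B : 'M[C]_(m, n)) i j : (A - B) i j = A i j - B i j.
Proof. by rewrite !mxE. Qed.
Lemma entryZ m n (a : C) (A : 'M[C]_(m, n)) i j : (a *: A) i j = a * A i j.
Proof. by rewrite !mxE. Qed.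

Definition qf n (M : 'M[C]_n) (v : 'cV[C]_n) := (adjmx v *m M *m v) 0 0.

Lemma qf_self n (w : 'cV[C]_n) : (adjmx w *m w) 0 0 = \sum_i (w i 0)^* * w i 0.
Proof. by rewrite mxE; apply: eq_bigr => i _; rewrite !mxE. Qed.

Lemma psd_ker n (M : 'M[C]_n) v : psdmx M -> qf M v = 0 -> M *m v = 0.
Proof.
case=> hM hpos hq.
set w := M *m v.
set s := qf M w.
set a := (adjmx w *m w) 0 0.
have a0 : 0 <= a.
  by rewrite /a qf_self; apply: sumr_ge0 => i _; rewrite mulrC mul_conjC_ge0.
have s0 : 0 <= s := hpos w.
have sr : (s + 1)^* = s + 1 by apply: conj_Creal; rewrite realD ?ger0_real.
have ar : a^* = a by apply: conj_Creal; rewrite ger0_real.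
have e1 : adjmx v *m M = adjmx w by rewrite /w adjmx_mul hM.
have := hpos ((s + 1) *: v - a *: w).
rewrite adjmxB !adjmxZ sr ar !mulmxBl !mulmxBr -!scalemxAl -!scalemxAr.
have E2 : adjmx v *m M *m w = adjmx w *m w by rewrite e1.
have E3 : adjmx w *m M *m v = adjmx w *m w by rewrite -mulmxA.
rewrite E2 E3.
rewrite !entryB !entryZ.
have -> : (adjmx v *m M *m v) 0 0 = 0 by exact: hq.
rewrite -/a -/s => h.
have h2 : 0 <= a ^+ 2 * (s + 2).
  by apply: mulr_ge0; [exact: exprn_ge0 | apply: addr_ge0].

have h3 : a ^+ 2 * (s + 2) = 0.
  apply/eqP; rewrite eq_le h2 andbT -oppr_ge0.
  by move: h; congr (0 <= _); rewrite -/(qf M w) -/s; ring.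
have a00 : a = 0.
  move/eqP: h3; rewrite mulf_eq0 expf_eq0 /= => /orP[/eqP //|].
  by rewrite gt_eqF // ltr_wpDl // ltr0n.
move: a00; rewrite /a qf_self => a00.
have hw i : (w i 0)^* * w i 0 = 0.
  apply: (psumr_eq0P _ a00) => // k _.
  by rewrite mulrC mul_conjC_ge0.
apply/matrixP=> i j; rewrite (ord1 j).
by move/eqP: (hw i); rewrite mulrC mul_conjC_eq0 => /eqP ->; rewrite mxE.
Qed.


Lemma sum9 (F : 'I_9 -> C) : \sum_q F q =
  F (inord 0) + (F (inord 1) + (F (inord 2) + (F (inord 3) + (F (inord 4) +
  (F (inord 5) + (F (inord 6) + (F (inord 7) + F (inord 8)))))))).
Proof.
rewrite (eq_bigr (fun q : 'I_9 => F (inord q))) => [|q _]; last by rewrite inord_val.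
by rewrite -(big_mkord xpredT (fun q => F (inord q))) !big_nat_recl // big_geq // addr0.
Qed.

Lemma sum4 (F : 'I_4 -> C) : \sum_q F q =
  F (inord 0) + (F (inord 1) + (F (inord 2) + F (inord 3))).
Proof.
rewrite (eq_bigr (fun q : 'I_4 => F (inord q))) => [|q _]; last by rewrite inord_val.
by rewrite -(big_mkord xpredT (fun q => F (inord q))) !big_nat_recl // big_geq // addr0.
Qed.

Definition blkn (p : nat) : nat :=
  match p with 0 | 1 | 2 => 0 | 3 | 4 | 5 => 1 | _ => 2 end.
Definition innn (p : nat) : nat :=
  match p with 0 | 3 | 6 => 0 | 1 | 4 | 7 => 1 | _ => 2 end.
Definition idxn (i k : nat) : nat :=
  match i with 0 => k | 1 => k.+3 | _ => k.+3.+3 end.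

Lemma ord9E (P : 'I_9 -> Prop) : (forall k, (k < 9)%N -> P (inord k)) -> forall p, P p.
Proof. by move=> h p; rewrite -(inord_val p); apply: h. Qed.

Lemma blkE p : (p < 9)%N -> blk (inord p : 'I_9) = inord (blkn p).
Proof.
by case: p => [|[|[|[|[|[|[|[|[|p]]]]]]]]] // _; apply/val_inj; rewrite /blk /= !inordK.
Qed.

Lemma innE p : (p < 9)%N -> inn (inord p : 'I_9) = inord (innn p).
Proof.
by case: p => [|[|[|[|[|[|[|[|[|p]]]]]]]]] // _; apply/val_inj; rewrite /inn /= !inordK.
Qed.

Lemma idxE i k : (i < 3)%N -> (k < 3)%N -> idx (inord i) (inord k) = inord (idxn i k).
Proof.
by case: i => [|[|[|i]]] // _; case: k => [|[|[|k]]] // _; apply/val_inj; rewrite /idx /= !inordK.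
Qed.

Lemma blkn_lt p : (blkn p < 3)%N.
Proof. by case: p => [|[|[|[|[|[|p]]]]]]. Qed.
Lemma innn_lt p : (innn p < 3)%N.
Proof. by case: p => [|[|[|[|[|[|[|[|[|p]]]]]]]]]. Qed.

Definition en (M : 'M[C]_9) (i j : nat) := M (inord i) (inord j).

Lemma ptransE (M : 'M[C]_9) p q : (p < 9)%N -> (q < 9)%N ->
  en (ptrans M) p q = en M (idxn (blkn q) (innn p)) (idxn (blkn p) (innn q)).
Proof.
move=> hp hq; rewrite /en /ptrans mxE blkE // innE // blkE // innE //.
by rewrite !idxE ?blkn_lt ?innn_lt.
Qed.

Lemma ztildeE (z : 'M[C]_3) p : (p < 9)%N ->
  ztilde z (inord p) 0 = z (inord (blkn p)) (inord (innn p)).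
Proof. by move=> hp; rewrite mxE blkE // innE. Qed.

Variable lam : C.
Hypothesis lamR : lam \is Num.real.
Hypothesis lam0 : 0 < lam.
Hypothesis lam1 : lam != 1.

Let L := lam ^+ 2.

Lemma lamN0 : lam != 0. Proof. by rewrite gt_eqF. Qed.
Lemma conj_lam : lam^* = lam. Proof. exact: conj_Creal. Qed.
Lemma conj_L : L^* = L. Proof. by rewrite /L rmorphXn /= conj_lam. Qed.
Lemma conj_mu : (lam^-1)^* = lam^-1. Proof. by rewrite fmorphV /= conj_lam. Qed.
Lemma LN0 : L != 0. Proof. by rewrite /L expf_neq0 // lamN0. Qed.
Lemma L3N1 : L ^+ 3 != 1.
Proof. by rewrite /L -exprM pexpr_eq1 // ltW. Qed.

Definition Kent (j p : nat) : C :=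
  match j, p with
  | 0, 0 => 1 | 0, 4 => -1
  | 1, 4 => 1 | 1, 8 => -1
  | 2, 1 => 1 | 2, 3 => - L
  | 3, 2 => - L | 3, 6 => 1
  | 4, 5 => 1 | 4, 7 => - L
  | _, _ => 0
  end.

Definition kv (j : nat) : 'cV[C]_9 := \col_p Kent j p.

Lemma AmatE i j : (i < 9)%N -> (j < 9)%N -> en (Amat lam) i j = Aent lam i j.
Proof. by move=> hi hj; rewrite /en mxE !inordK. Qed.

Lemma Akv j : (j < 5)%N -> Amat lam *m kv j = 0.
Proof.
move=> hj; apply/matrixP => p k; rewrite (ord1 k) {k}; move: p; apply: ord9E => p hp.
rewrite !mxE sum9 !mxE !inordK //.
have h := lamN0.
case: j hj => [|[|[|[|[|j]]]]] // _;
 case: p hp => [|[|[|[|[|[|[|[|[|p]]]]]]]]] // _; rewrite /= /L; try field.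
all: done.
Qed.

Lemma qfD n (M N : 'M[C]_n) v : qf (M + N) v = qf M v + qf N v.
Proof. by rewrite /qf mulmxDr mulmxDl mxE. Qed.

Lemma qf_ker n (M : 'M[C]_n) v : M *m v = 0 -> qf M v = 0.
Proof. by move=> h; rewrite /qf -mulmxA h mulmx0 mxE. Qed.

Lemma kerB n (B D A : 'M[C]_n) (v : 'cV[C]_n) : psdmx B -> psdmx D -> A = B + D ->
  A *m v = 0 -> B *m v = 0.
Proof.
move=> hB hD hA hv; apply: psd_ker => //.
have := qf_ker hv; rewrite hA qfD => /eqP; rewrite paddr_eq0.
  by case/andP => /eqP.
by case: hB => _; apply. by case: hD => _; apply.
Qed.

Lemma ptransD (M N : 'M[C]_9) : ptrans (M + N) = ptrans M + ptrans N.
Proof. by apply/matrixP => p q; rewrite !mxE. Qed.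

Lemma herm n (M : 'M[C]_n) p q : adjmx M = M -> M q p = (M p q)^*.
Proof. by move/matrixP => /(_ q p) <-; rewrite !mxE. Qed.

Section Rel.
Variable M : 'M[C]_9.
Hypothesis hM : forall j, (j < 5)%N -> M *m kv j = 0.

Lemma relE j p : (j < 5)%N -> (p < 9)%N ->
  \sum_(q < 9) M (inord p) q * Kent j q = 0.
Proof.
move=> hj hp; have e := hM hj; move/matrixP: e => /(_ (inord p) 0) e.
rewrite !mxE in e; rewrite -[RHS]e; apply: eq_bigr => q _; by rewrite mxE.
Qed.

Ltac rel j := let e := fresh in move=> hp; have e := relE (j := j) isT hp; rewrite sum9 /= !inordK //= in e; apply/eqP; rewrite -subr_eq0 -e /en; apply/eqP; ring.

Lemma cr0 p : (p < 9)%N -> en M p 0 = en M p 4. Proof. rel 0%N. Qed.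
Lemma cr1 p : (p < 9)%N -> en M p 4 = en M p 8. Proof. rel 1%N. Qed.
Lemma cr2 p : (p < 9)%N -> en M p 1 = L * en M p 3. Proof. rel 2%N. Qed.
Lemma cr3 p : (p < 9)%N -> en M p 6 = L * en M p 2. Proof. rel 3%N. Qed.
Lemma cr4 p : (p < 9)%N -> en M p 5 = L * en M p 7. Proof. rel 4%N. Qed.
End Rel.

Definition repn (p : nat) : nat :=
  match p with 0 | 4 | 8 => 0 | 1 | 3 => 3 | 2 | 6 => 2 | _ => 7 end.
Definition fn (p : nat) : C :=
  match p with 1 | 5 | 6 => L | _ => 1 end.

Lemma extreme_core (B : 'M[C]_9) :
  adjmx B = B ->
  (forall j, (j < 5)%N -> B *m kv j = 0) ->
  (forall j, (j < 5)%N -> ptrans B *m kv j = 0) ->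
  B = B (inord 0) (inord 0) *: Amat lam.
Proof.
move=> hA hB hBt.
have hH p q : en B q p = (en B p q)^* by rewrite /en (herm _ _ hA).
have rr0 q : (q < 9)%N -> en B 0 q = en B 4 q.
  by move=> hq; rewrite (hH q 0) (hH q 4) (cr0 hB hq).
have rr1 q : (q < 9)%N -> en B 4 q = en B 8 q.
  by move=> hq; rewrite (hH q 4) (hH q 8) (cr1 hB hq).
have rr2 q : (q < 9)%N -> en B 1 q = L * en B 3 q.
  by move=> hq; rewrite (hH q 1) (hH q 3) (cr2 hB hq) rmorphM /= conj_L.
have rr3 q : (q < 9)%N -> en B 6 q = L * en B 2 q.
  by move=> hq; rewrite (hH q 6) (hH q 2) (cr3 hB hq) rmorphM /= conj_L.
have rr4 q : (q < 9)%N -> en B 5 q = L * en B 7 q.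
  by move=> hq; rewrite (hH q 5) (hH q 7) (cr4 hB hq) rmorphM /= conj_L.
have PT0 p : (p < 9)%N -> en (ptrans B) p 0 = en (ptrans B) p 4 by exact: cr0.
have PT1 p : (p < 9)%N -> en (ptrans B) p 4 = en (ptrans B) p 8 by exact: cr1.
have hl := lamN0.
have L3 := L3N1.
have cancel3 x : x = L ^+ 3 * x -> x = 0.
  move=> e; apply/eqP; have : (1 - L ^+ 3) * x == 0 by rewrite mulrBl mul1r -e subrr.
  by rewrite mulf_eq0 subr_eq0 eq_sym (negPf L3).
set b := en B 0 0.
have d3 : en B 3 3 = lam^-1 ^+ 2 * b.
  have := PT0 0%N isT; rewrite !ptransE //= (cr2 hB) // => e.
  by rewrite /b e mulrA /L -exprMn mulVf // expr1n mul1r.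
have d2 : en B 2 2 = lam^-1 ^+ 2 * b.
  have := PT0 0%N isT; rewrite PT1 // !ptransE //= rr3 // => e.
  by rewrite /b e mulrA /L -exprMn mulVf // expr1n mul1r.
have d7 : en B 7 7 = lam^-1 ^+ 2 * b.
  have := PT1 4%N isT; rewrite !ptransE //= (cr4 hB) // -rr0 // -(cr0 hB) // => e.
  by rewrite /b e mulrA /L -exprMn mulVf // expr1n mul1r.
have o1 : en B 2 0 = L * (L * en B 7 3).
  by have := PT0 2%N isT; rewrite !ptransE //= rr4 // (cr2 hB).
have o2 : en B 3 7 = L * en B 0 2.
  by have := PT0 6%N isT; rewrite !ptransE //= (cr3 hB) // => ->.
have z02 : en B 0 2 = 0.
  apply: cancel3; rewrite {1}(hH 2 0) o1 !rmorphM /= !conj_lam -hH o2 /L; ring.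
have z37 : en B 3 7 = 0 by rewrite o2 z02 mulr0.
have z20 : en B 2 0 = 0 by rewrite (hH 0 2) z02 conjC0.
have z73 : en B 7 3 = 0 by rewrite (hH 3 7) z37 conjC0.
have o3 : en B 2 3 = L * en B 7 0.
  by have := PT0 5%N isT; rewrite !ptransE //= rr4 // -(cr0 hB).
have o4 : en B 0 7 = L * (L * en B 3 2).
  by have := PT0 7%N isT; rewrite !ptransE //= rr2 // (cr3 hB) // -rr0.
have z23 : en B 2 3 = 0.
  apply: cancel3; rewrite {1}o3 (hH 0 7) o4 !rmorphM /= !conj_lam -hH /L; ring.
have z70 : en B 7 0 = 0.
  by move: o3; rewrite z23 => /esym/eqP; rewrite !mulf_eq0 (negPf lamN0) => /eqP.
have z32 : en B 3 2 = 0 by rewrite (hH 2 3) z23 conjC0.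
have z07 : en B 0 7 = 0 by rewrite (hH 7 0) z70 conjC0.
have o5 : L * en B 3 0 = en B 7 2.
  by have := PT0 1%N isT; rewrite PT1 // !ptransE //= rr2.
have o6 : en B 0 3 = L * (L * en B 2 7).
  by have := PT0 3%N isT; rewrite PT1 // !ptransE //= rr3 // (cr4 hB).
have z03 : en B 0 3 = 0.
  apply: cancel3; rewrite {1}o6 (hH 7 2) -o5 !rmorphM /= !conj_lam -hH /L; ring.
have z27 : en B 2 7 = 0.
  by move: o6; rewrite z03 => /esym/eqP; rewrite !mulf_eq0 (negPf lamN0) => /eqP.
have z30 : en B 3 0 = 0 by rewrite (hH 0 3) z03 conjC0.
have z72 : en B 7 2 = 0 by rewrite (hH 2 7) z27 conjC0.
have redr p q : (p < 9)%N -> (q < 9)%N -> en B p q = fn p * en B (repn p) q.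
  move=> hp hq; case: p hp => [|[|[|[|[|[|[|[|[|p]]]]]]]]] // _; rewrite /= ?mul1r //.
  all: try by rewrite ?(rr2 _ hq) ?(rr4 _ hq) ?(rr3 _ hq) -?(rr1 _ hq) -?(rr0 _ hq).
have redc p q : (p < 9)%N -> (q < 9)%N -> en B p q = fn q * en B p (repn q).
  move=> hp hq; case: q hq => [|[|[|[|[|[|[|[|[|q]]]]]]]]] // _; rewrite /= ?mul1r //.
  all: try by rewrite ?(cr2 hB hp) ?(cr4 hB hp) ?(cr3 hB hp) -?(cr1 hB hp) -?(cr0 hB hp).
apply/matrixP; apply: ord9E => p hp; apply: ord9E => q hq.
rewrite mxE; change (en B p q = b * en (Amat lam) p q).
rewrite redr // redc //; last by case: p hp => [|[|[|[|[|[|[|[|[|p]]]]]]]]].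
rewrite AmatE //.
case: p hp => [|[|[|[|[|[|[|[|[|p]]]]]]]]] // _;
 case: q hq => [|[|[|[|[|[|[|[|[|q]]]]]]]]] // _;
 rewrite /= ?d3 ?d2 ?d7 ?z02 ?z37 ?z20 ?z73 ?z23 ?z70 ?z32 ?z07 ?z03 ?z27 ?z30 ?z72 /b /L;
 try field.
all: try done.
Qed.


Lemma ptransA : ptrans (Amat lam) = Amat lam.
Proof.
apply/matrixP; apply: ord9E => p hp; apply: ord9E => q hq.
change (en (ptrans (Amat lam)) p q = en (Amat lam) p q).
case: p hp => [|[|[|[|[|[|[|[|[|p]]]]]]]]] // _;
 case: q hq => [|[|[|[|[|[|[|[|[|q]]]]]]]]] // _;
 by rewrite ptransE // /= !AmatE.
Qed.

Definition Uent (p i : nat) : C :=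
  match i, p with
  | 0, 0 | 0, 4 | 0, 8 => 1
  | 1, 1 | 2, 6 | 3, 5 => lam
  | 1, 3 | 2, 2 | 3, 7 => lam^-1
  | _, _ => 0
  end.

Definition U : 'M[C]_(9, 4) := \matrix_(p, i) Uent p i.

Lemma AU : Amat lam = U *m adjmx U.
Proof.
have hl := lamN0.
apply/matrixP; apply: ord9E => p hp; apply: ord9E => q hq.
rewrite !mxE sum4 !mxE !inordK //.
case: p hp => [|[|[|[|[|[|[|[|[|p]]]]]]]]] // _;
 case: q hq => [|[|[|[|[|[|[|[|[|q]]]]]]]]] // _;
 rewrite /= ?conjC0 ?conjC1 ?conj_lam ?conj_mu; try field.
all: try done.
Qed.

Lemma adjmxK m n (M : 'M[C]_(m, n)) : adjmx (adjmx M) = M.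
Proof. by apply/matrixP => i j; rewrite !mxE conjCK. Qed.

Lemma psd_gram m n (V : 'M[C]_(m, n)) : psdmx (V *m adjmx V).
Proof.
split; first by rewrite adjmx_mul adjmxK.
move=> v; have -> : adjmx v *m (V *m adjmx V) *m v = adjmx (adjmx V *m v) *m (adjmx V *m v).
  by rewrite adjmx_mul adjmxK !mulmxA.
rewrite qf_self.
by apply: sumr_ge0 => i _; rewrite mulrC mul_conjC_ge0.
Qed.

Lemma psdA : psdmx (Amat lam).
Proof. rewrite AU; exact: psd_gram. Qed.

Lemma inTA : inT (Amat lam).
Proof. by split; rewrite ?ptransA; exact: psdA. Qed.

Definition e0 : 'cV[C]_9 := \col_p (if p == inord 0 :> 'I_9 then 1 else 0).

Lemma qf_e0 (M : 'M[C]_9) : qf M e0 = M (inord 0) (inord 0).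
Proof.
rewrite /qf mxE sum9 !mxE !sum9 !mxE /=.
have hn k : (k < 9)%N -> (0 < k)%N -> (inord k == inord 0 :> 'I_9) = false.
  by move=> hk hk0; apply/negbTE; apply/eqP => /(congr1 val); rewrite /= !inordK //; move=> e; rewrite e in hk0.
rewrite eqxx !hn // ?conjC0 ?conjC1; ring.
Qed.

Lemma extreme_half (B D : 'M[C]_9) : inT B -> inT D -> Amat lam = B + D ->
  exists2 b : C, 0 <= b & B = b *: Amat lam.
Proof.
move=> [hB hBt] [hD hDt] hA.
exists (B (inord 0) (inord 0)).
  by rewrite -qf_e0; case: hB => _; apply.
apply: extreme_core.
- by case: hB.
- by move=> j hj; apply: (kerB hB hD hA); exact: Akv.
- move=> j hj; apply: (kerB hBt hDt (A := Amat lam)); last exact: Akv.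
  by rewrite -ptransA hA ptransD.
Qed.

Lemma minor_rank (z : 'M[C]_3) : (\rank z <= 1)%N ->
  forall i j k l, z i j * z k l = z i l * z k j.
Proof.
move=> hr i j k l; rewrite -(mulmx_base z).
move: (col_base z) (row_base z) hr; case: (\rank z) => [|[|r]] X Y // _.
  by rewrite !mxE !big_ord0 !mul0r.
by rewrite !mxE !big_ord1; ring.
Qed.

Lemma ord3E (P : 'I_3 -> Prop) : (forall k, (k < 3)%N -> P (inord k)) -> forall p, P p.
Proof. by move=> h p; rewrite -(inord_val p); apply: h. Qed.

Definition sj j (z : 'M[C]_3) := (adjmx (kv j) *m ztilde z) 0 0.

Lemma alg_zero (a x10 x02 x21 : C) :
  L * x10 * (L * x21) = x02 * a -> x10 * x21 = a * (L * x02) ->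
  a * a = x02 * (L * x02) -> a * a = L * x10 * x10 -> a * a = L * x21 * x21 ->
  [/\ a = 0, x10 = 0, x02 = 0 & x21 = 0].
Proof.
move=> E1 E2 E3 E4 E5.
have hL := LN0; have L3 := L3N1.
have h1 : a * x02 = 0.
  have : (1 - L ^+ 3) * (a * x02) =
     (x02 * a - L * x10 * (L * x21)) + L ^+ 2 * (x10 * x21 - a * (L * x02)) by ring.
  rewrite E1 E2 !subrr mulr0 addr0 => /eqP; rewrite mulf_eq0 subr_eq0 eq_sym (negPf L3).
  by move/eqP.
have ha : a = 0.
  have : a * a * a = L * x02 * (a * x02) by rewrite E3; ring.
  by rewrite h1 mulr0 => /eqP; rewrite !mulf_eq0 !orbb => /eqP.
move: E3 E4 E5; rewrite ha mulr0 => /esym/eqP E3 /esym/eqP E4 /esym/eqP E5.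
move: E3 E4 E5; rewrite !mulf_eq0 (negPf lamN0) /= !orbb => /eqP -> /eqP -> /eqP ->.
by [].
Qed.

Lemma kerz (z : 'M[C]_3) : (\rank z <= 1)%N ->
  (forall j, (j < 5)%N -> sj j z = 0) -> z = 0.
Proof.
move=> hr hs.
have hm := minor_rank hr.
have E j : (j < 5)%N -> \sum_(p < 9) (Kent j p)^* * z (inord (blkn p)) (inord (innn p)) = 0.
  move=> hj; transitivity (sj j z); last exact: hs. rewrite /sj mxE; apply: eq_bigr => p _.
  rewrite !mxE; congr (_ * _); have hp := ltn_ord p; rewrite -[in RHS](inord_val p) blkE // innE //.
have e0 := E 0%N isT; have e1 := E 1%N isT; have e2 := E 2%N isT.
have e3 := E 3%N isT; have e4 := E 4%N isT.
move: e0 e1 e2 e3 e4; rewrite !sum9 !inordK //= ?rmorphN /= ?conj_L ?conjC0 ?conjC1.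
move=> e0 e1 e2 e3 e4.
set x := fun i k => z (inord i) (inord k).
have f0 : x 0 0 - x 1 1 = 0 by rewrite -e0 /x; ring.
have f1 : x 1 1 - x 2 2 = 0 by rewrite -e1 /x; ring.
have f2 : x 0 1 - L * x 1 0 = 0 by rewrite -e2 /x; ring.
have f3 : x 2 0 - L * x 0 2 = 0 by rewrite -e3 /x; ring.
have f4 : x 1 2 - L * x 2 1 = 0 by rewrite -e4 /x; ring.
move/eqP: f0; rewrite subr_eq0 => /eqP f0.
move/eqP: f1; rewrite subr_eq0 => /eqP f1.
move/eqP: f2; rewrite subr_eq0 => /eqP f2.
move/eqP: f3; rewrite subr_eq0 => /eqP f3.
move/eqP: f4; rewrite subr_eq0 => /eqP f4.
have m1 : x 0 0 * x 1 1 = x 0 1 * x 1 0 by rewrite /x hm.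
have m2 : x 1 1 * x 2 2 = x 1 2 * x 2 1 by rewrite /x hm.
have m3 : x 0 0 * x 2 2 = x 0 2 * x 2 0 by rewrite /x hm.
have m4 : x 0 1 * x 1 2 = x 0 2 * x 1 1 by rewrite /x hm.
have m5 : x 1 0 * x 2 1 = x 1 1 * x 2 0 by rewrite /x hm.
rewrite -f1 -f0 in m2 m3.
rewrite -f0 in m1 m4 m5.
rewrite f2 f4 in m4; rewrite f3 in m5; rewrite f3 in m3; rewrite f2 in m1; rewrite f4 in m2.
have [ha h10 h02 h21] := alg_zero m4 m5 m3 m1 m2.
apply/matrixP; apply: ord3E => i hi; apply: ord3E => k hk; rewrite [RHS]mxE.
change (x i k = 0).
case: i hi => [|[|[|i]]] // _; case: k hk => [|[|[|k]]] // _.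
all: by rewrite ?f2 ?f3 ?f4 -?f1 -?f0 ?ha ?h10 ?h02 ?h21 ?mulr0.
Qed.


Lemma adjmxE m n (M : 'M[C]_(m, n)) i j : adjmx M i j = (M j i)^*.
Proof. by rewrite !mxE. Qed.

Lemma qf_zz (z : 'M[C]_3) (v : 'cV[C]_9) :
  qf (zzstar z) v = (adjmx v *m ztilde z) 0 0 * ((adjmx v *m ztilde z) 0 0)^*.
Proof.
rewrite /qf /zzstar.
have -> : adjmx v *m (ztilde z *m adjmx (ztilde z)) *m v =
   (adjmx v *m ztilde z) *m adjmx (adjmx v *m ztilde z).
  by rewrite adjmx_mul adjmxK !mulmxA.
by rewrite mxE big_ord1 adjmxE.
Qed.

Lemma qf_sum N (c : 'I_N -> C) (M : 'I_N -> 'M[C]_9) v :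
  qf (\sum_(t < N) c t *: M t) v = \sum_(t < N) c t * qf (M t) v.
Proof.
rewrite /qf mulmx_sumr mulmx_suml summxE; apply: eq_bigr => t _.
by rewrite -scalemxAr -scalemxAl mxE.
Qed.

Lemma notV1 : ~ inV1 (Amat lam).
Proof.
case=> N [c [z [hc [hr hA]]]].
have hq j : (j < 5)%N -> \sum_(t < N) c t * (sj j (z t) * (sj j (z t))^*) = 0.
  move=> hj; transitivity (qf (Amat lam) (kv j)); last exact: qf_ker (Akv hj).
  rewrite hA qf_sum; apply: eq_bigr => t _.
  by rewrite qf_zz.
have ht t j : (j < 5)%N -> c t * (sj j (z t) * (sj j (z t))^*) = 0.
  move=> hj; apply: (psumr_eq0P _ (hq j hj)) => // k _.
  by apply: mulr_ge0; [exact: hc | exact: mul_conjC_ge0].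
have hz t : c t *: zzstar (z t) = 0.
  case: (eqVneq (c t) 0) => [->|hct]; first by rewrite scale0r.
  have hs j : (j < 5)%N -> sj j (z t) = 0.
    move=> hj; move/eqP: (ht t j hj); rewrite mulf_eq0 (negPf hct) /= mul_conjC_eq0.
    by move/eqP.
  rewrite (kerz (hr t) hs) /zzstar.
  have -> : ztilde (0 : 'M[C]_3) = 0 by apply/matrixP => p q; rewrite !mxE.
  by rewrite mul0mx scaler0.
have : Amat lam = 0 by rewrite hA big1.
move/matrixP => /(_ (inord 0) (inord 0)); rewrite !mxE inordK //= => /eqP.
by rewrite oner_eq0.
Qed.
End S.

Theorem mainTheorem2 (C : numClosedFieldType) (lam : C) :
  lam \is Num.real -> 0 < lam -> lam != 1 ->
  [/\ inT (Amat lam), ~ inV1 (Amat lam) &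
      forall B D : 'M[C]_9, inT B -> inT D -> Amat lam = B + D ->
        (exists2 b : C, 0 <= b & B = b *: Amat lam) /\
        (exists2 d : C, 0 <= d & D = d *: Amat lam)].
Proof.
move=> hr h0 h1; split.
- by apply: inTA.
- by apply: notV1.
- move=> B D hB hD hA; split.
    by apply: extreme_half hB hD hA.
  have hA2 : Amat lam = D + B by rewrite addrC.
  by apply: extreme_half hD hB hA2.
Qed.
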